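(* Let $I\subseteq\mathbb{R}$ be a closed, non-degenerate (possibly unbounded) interval and let $\mu$ be a continuous Borel probability measure on $\mathbb{R}$. Then $$1-\mu(I)=\inf\{d_{Ku}(\mu,\vartheta) : \vartheta\in P_c(\mathbb{R}),\ S_\vartheta\subseteq I\}.$$ Furthermore, if $\mu\in P_{ac}(\mathbb{R})$, then $$1-\mu(I)=\inf\{d_{Ku}(\mu,\vartheta) : \vartheta\in P_{ac}(\mathbb{R}),\ S_\vartheta\subseteq I\}.$$
   Context: $P_c(\mathbb{R})$ denotes the continuous (atomless) Borel probability measures on $\mathbb{R}$ and $P_{ac}(\mathbb{R})$ those absolutely continuous with respect to Lebesgue measure. $S_\vartheta$ is the closed support of $\vartheta$ (smallest closed set of full measure). The Kuiper distance is $d_{Ku}(\mu,\nu)=\sup\{|\mu(J)-\nu(J)| : J\text{ a non-degenerate interval of }\mathbb{R}\}$, equivalently $\sup_t(f_\mu(t)-f_\nu(t))+\sup_t(f_\nu(t)-f_\mu(t))$ with $f_\mu(t)=\mu((-\infty,t])$. *)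

(* Defs.v *)
From HB Require Import structures.
From mathcomp Require Import all_boot all_order all_algebra.
From mathcomp Require Import all_classical all_reals all_analysis.
Set Implicit Arguments. Unset Strict Implicit. Unset Printing Implicit Defensive.
Import Order.TTheory GRing.Theory Num.Theory.
Import numFieldNormedType.Exports.
Local Open Scope classical_set_scope.
Local Open Scope ring_scope.

(* Borel probability measures on R: [probability R R] with the canonical
   (Borel) measurable structure of R. *)

Definition atomless (R : realType) (mu : probability R R) : Prop :=
  forall x : R, mu [set x] = 0%E.

Definition abs_cont (R : realType) (mu : probability R R) : Prop :=
  mu `<< (@lebesgue_measure R).

Definition msupport (R : realType) (mu : probability R R) : set R :=
  \bigcap_(C in [set C : set R | closed C /\ measurable C /\ mu C = 1%E]) C.

Definition nondeg_interval (R : realType) (J : set R) : Prop :=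
  (exists i : interval R, J = [set` i]) /\
  exists x y : R, [/\ J x, J y & x < y].

Definition dKu (R : realType) (mu nu : probability R R) : \bar R :=
  ereal_sup [set `|(mu J - nu J)%E|%E | J in [set J : set R | nondeg_interval J]].

(* Main.v *)
Require Import Defs.
From HB Require Import structures.
From mathcomp Require Import all_boot all_order all_algebra.
From mathcomp Require Import all_classical all_reals all_analysis.
From mathcomp Require Import measurable_realfun ring lra.
Import Order.TTheory GRing.Theory Num.Theory.
Import numFieldNormedType.Exports.
Local Open Scope classical_set_scope.
Local Open Scope ring_scope.

Lemma null_ball (R : realType) (th : probability R R) (x : R) :
  ~ msupport th x -> exists e : R, 0 < e /\ th (ball x e) = 0%E.
Proof.
move=> nx.
have [C [[cC [mC thC]] nCx]] : exists C : set R,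
    (closed C /\ measurable C /\ th C = 1%E) /\ ~ C x.
  apply: contra_notP nx => H C HC; apply: contra_notP (H) => nC.
  by exists C.
have oC : open (~` C) by rewrite openC.
have := oC x nCx; rewrite -nbhs_ballE => -[e /= e0 eC].
exists e; split => //.
apply/eqP; rewrite eq_le measure_ge0 andbT.
have <- : th (~` C) = 0%E by rewrite probability_setC// thC subee.
apply: le_measure; rewrite ?inE//; last exact: measurableC.
by apply: open_measurable; exact: ball_open.
Qed.

Lemma supp_full (R : realType) (th : probability R R) (I : set R) :
  closed I -> msupport th `<=` I -> th I = 1%E.
Proof.
move=> cI sI.
pose B (p : rat * nat) : set R := ball (ratr p.1 : R) (p.2.+1%:R^-1 : R).
have mB p : measurable (B p) by rewrite /B ball_itv; exact: measurable_itv.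
pose G (p : rat * nat) : set R := if pselect (th (B p) = 0%E) then B p else set0.
pose F (k : nat) : set R := if @unpickle (rat * nat)%type k is Some p then G p else set0.
have nF k : th.-negligible (F k).
  rewrite /F; case: unpickle => [p|]; last exact: negligible_set0.
  rewrite /G; case: pselect => h; last exact: negligible_set0.
  by exists (B p); split.
have cov : ~` I `<=` \bigcup_k F k.
  move=> x nIx; have nsx : ~ msupport th x by move=> /sI.
  have [e [e0 he]] := @null_ball R th x nsx.
  have [n hn] : exists n, 0 + n.+1%:R^-1 < e / 2.
    by apply: ltr_add_invr; rewrite divr_gt0.
  rewrite add0r in hn.
  set r := n.+1%:R^-1 in hn.
  have r0 : 0 < r by rewrite invr_gt0.
  have xr : x - r < x + r by rewrite ltrBlDr -addrA ltrDl addr_gt0.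
  have [q hq] := @rat_in_itvoo R (x - r) (x + r) xr.
  exists (pickle (q, n)); first by [].
  rewrite /F pickleK /G.
  have hB : B (q, n) `<=` ball x e.
    move=> z; rewrite /B /= -!ball_normE /ball_ /= => hz.
    rewrite in_itv /= in hq.
    case/andP: hq => h1 h2.
    rewrite (le_lt_trans (ler_distD (ratr q) x z))//.
    rewrite (splitr e) ltrD// ?(lt_trans _ hn)//.
    by rewrite ltr_distlC h1 h2.
  have thB : th (B (q, n)) = 0%E.
    apply/eqP; rewrite eq_le measure_ge0 andbT -he.
    by apply: le_measure; rewrite ?inE//; rewrite ball_itv; exact: measurable_itv.
  case: pselect => //= ?.
  rewrite /B /= -ball_normE /ball_ /=.
  rewrite in_itv /= in hq.
  by rewrite distrC ltr_distlC.
have [A [mA thA sA]] := negligibleS cov (negligible_bigcup nF).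
have mI : measurable I by exact: closed_measurable.
have hC : th (~` I) = 0%E.
  apply/eqP; rewrite eq_le measure_ge0 andbT -thA.
  by apply: le_measure; rewrite ?inE//; exact: measurableC.
move: hC; rewrite probability_setC//.
have : (th I <= 1)%E by exact: probability_le1.
have : (0 <= th I)%E by exact: measure_ge0.
case: (th I) => // s; rewrite !lee_fin => s0 s1.
by rewrite -EFinB => -[] /eqP; rewrite subr_eq0 => /eqP <-.
Qed.

Lemma aux_bound (R : realType) (u v w k : \bar R) :
  (u <= k)%E -> (v <= k)%E -> (0 <= u)%E -> (0 <= v)%E -> (0 <= w)%E -> (w <= 1)%E ->
  (`| u + w - (w + v) | <= k)%E.
Proof.
case: u => // u; case: v => // v; case: w => // w; case: k => [k| |] //; last by move=> *; rewrite leey.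
rewrite !lee_fin => h1 h2 h3 h4 _ _.
have -> : u + w - (w + v) = u - v by ring.
by rewrite ler_norml; apply/andP; split; lra.
Qed.

Section Construct.
Variables (R : realType) (mu : probability R R) (I : set R) (mI : measurable I).
Variables (a b : R) (ab : a < b).

Definition cval : R := fine (1 - mu I)%E.
Lemma muI_fin : (mu I = (fine (mu I))%:E)%E.
Proof.
have : (mu I <= 1)%E by exact: probability_le1.
have : (0 <= mu I)%E by exact: measure_ge0.
by case: (mu I).
Qed.
Lemma cval_ge0 : 0 <= cval.
Proof.
rewrite /cval muI_fin -EFinB /= subr_ge0 -lee_fin -muI_fin.
exact: probability_le1.
Qed.
Definition c : {nonneg R} := NngNum cval_ge0.
Lemma hc : (c%:num%:E = 1 - mu I)%E.
Proof. by rewrite /= /cval muI_fin -EFinB. Qed.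

Definition Uab : set R -> \bar R := uniform_prob ab.
HB.instance Definition _ := isMeasure.Build _ _ _ Uab
  (measure0 (uniform_prob ab)) (measure_ge0 (uniform_prob ab))
  (@measure_semi_sigma_additive _ _ _ (uniform_prob ab)).
Definition thm0 := measure_add (mrestr mu mI) (mscale c Uab).
Definition thm : set R -> \bar R := thm0.
HB.instance Definition _ := isMeasure.Build _ _ _ thm
  (measure0 thm0) (measure_ge0 thm0)
  (@measure_semi_sigma_additive _ _ _ thm0).

Lemma thmE A : thm A = (mu (A `&` I) + c%:num%:E * uniform_prob ab A)%E.
Proof. by rewrite /thm /thm0 measure_addE. Qed.


Let thmT : thm setT = 1%E.
Proof.
rewrite thmE setTI hc /Uab /uniform_prob integral_uniform_pdf1// mule1.
by rewrite muI_fin -EFinB -EFinD subrKC.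
Qed.

HB.instance Definition _ := Measure_isProbability.Build _ _ _ thm thmT.

Lemma Uab_null A : measurable A -> lebesgue_measure A = 0%E -> uniform_prob ab A = 0%E.
Proof.
move=> mA h; have := dominates_uniform_prob ab.
by move/null_content_dominatesP; apply.
Qed.

Lemma thm_atomless : atomless mu -> atomless thm.
Proof.
move=> hmu z; change (thm [set z] = 0%E); rewrite thmE Uab_null ?lebesgue_measure_set1// mule0 adde0.
apply/eqP; rewrite eq_le measure_ge0 andbT -(hmu z).
apply: le_measure; rewrite ?inE//; exact: measurableI.
Qed.

Lemma thm_ac : abs_cont mu -> abs_cont thm.
Proof.
rewrite /abs_cont => /null_content_dominatesP hmu.
apply/null_content_dominatesP => A mA h0.
change (thm A = 0%E); rewrite thmE Uab_null// mule0 adde0; apply: hmu; first exact: measurableI.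
apply/eqP; rewrite eq_le measure_ge0 andbT -h0.
apply: le_measure; rewrite ?inE//; exact: measurableI.
Qed.

Lemma thm_supp : closed I -> `[a, b] `<=` I -> msupport thm `<=` I.
Proof.
move=> cI abI z; apply; split => //; split => //.
change (thm I = 1%E); rewrite thmE setIid /Uab /uniform_prob integral_uniform_pdf1// mule1 hc.
by rewrite muI_fin -EFinB -EFinD subrKC.
Qed.

Lemma thm_diff J : measurable J -> (`| mu J - thm J | <= c%:num%:E)%E.
Proof.
move=> mJ; rewrite thmE (measureDI mu mJ mI).
have h1 : (mu (J `\` I) <= c%:num%:E)%E.
  rewrite hc -probability_setC//; apply: le_measure; rewrite ?inE //;
   (try exact: measurableD); (try exact: measurableC); by move=> x [].
have h2 : (c%:num%:E * uniform_prob ab J <= c%:num%:E)%E.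
  rewrite -[leRHS]mule1; apply: lee_wpmul2l => //.
  exact: probability_le1.
have h3 : (0 <= mu (J `\` I))%E by exact: measure_ge0.
have h4 : (0 <= c%:num%:E * uniform_prob ab J)%E by apply: mule_ge0.
have h5 : (0 <= mu (J `&` I))%E by exact: measure_ge0.
have h6 : (mu (J `&` I) <= 1)%E by apply: probability_le1; exact: measurableI.
exact: aux_bound.
Qed.

End Construct.


Theorem lemma2p4 (R : realType) (I : set R) (mu : probability R R) :
  closed I -> nondeg_interval I -> atomless mu ->
  ((1 - mu I)%E =
     ereal_inf [set dKu mu th | th in
       [set th : probability R R | atomless th /\ msupport th `<=` I]])
  /\
  (abs_cont mu ->
   (1 - mu I)%E =
     ereal_inf [set dKu mu th | th in
       [set th : probability R R | abs_cont th /\ msupport th `<=` I]]).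
Proof.
move=> cI ndI hmu; have [[i Ii] [x [y [Ix Iy xy]]]] := ndI.
have mI : measurable I by exact: closed_measurable.
have abI : `[x, y] `<=` I.
  move=> z; rewrite /= in_itv /= => hz.
  by move: Ix Iy; rewrite Ii => Ix Iy; exact: (interval_is_interval Ix Iy hz).
have lb : forall th : probability R R, msupport th `<=` I -> (1 - mu I <= dKu mu th)%E.
  move=> th sth; have thI := @supp_full R th I cI sth.
  apply: (@le_trans _ _ (`| mu I - th I |)%E); last first.
    by apply: ereal_sup_ubound; exists I.
  rewrite thI (muI_fin R mu I).
  change (((1 - fine (mu I))%:E <= `|((fine (mu I) - 1)%:E)|)%E).
  rewrite /= lee_fin.
  by rewrite distrC ler_norm.
  exact: mI.
pose th0 : probability R R := thm R mu I mI x y xy.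
have ub : (dKu mu th0 <= 1 - mu I)%E.
  apply: ge_ereal_sup => _ [J [[j ->] _] <-].
  rewrite -(hc R mu I); exact: (thm_diff R mu I mI x y xy _ (measurable_itv j)).
have sth : msupport th0 `<=` I by exact: (thm_supp R mu I mI x y xy cI abI).
split.
  apply/eqP; rewrite eq_le; apply/andP; split.
    by apply: le_ereal_inf_tmp => _ [t [_ st] <-]; exact: lb.
  apply: ge_ereal_inf; exists (dKu mu th0) => //; exists th0 => //; split => //.
  exact: (thm_atomless R mu I mI x y xy hmu).
move=> acmu.
apply/eqP; rewrite eq_le; apply/andP; split.
  by apply: le_ereal_inf_tmp => _ [t [_ st] <-]; exact: lb.
apply: ge_ereal_inf; exists (dKu mu th0) => //; exists th0 => //; split => //.
exact: (thm_ac R mu I mI x y xy acmu).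
Qed.
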